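(* Let $N\ge2$, let $\mathbf{K}\in\mathbb{R}^{N\times N}$ be the cyclic shift matrix ($(\mathbf{K}\mathbf{x})_1=x_N$, $(\mathbf{K}\mathbf{x})_i=x_{i-1}$ for $i\ge2$), $\mathbf{K}(\nu)=(1-\nu)\mathbf{I}+\nu\mathbf{K}$, and for $\tilde\nu\in\mathbb{R}$ let $\mathcal{K}(\tilde\nu)=\mathbf{K}^{\lfloor\tilde\nu\rfloor}\mathbf{K}(\tilde\nu-\lfloor\tilde\nu\rfloor)$ (with $\mathbf{K}^{-1}=\mathbf{K}^T$). Let $\mathbf{a},\mathbf{b}\in\mathbb{R}^N$, both not parallel to $\mathbf{1}=(1,\dots,1)^T$. Define $g:\mathbb{R}\to\mathbb{R}^N$ by $g(\tilde\nu)=\mathbf{b}-\mathcal{K}(\tilde\nu)^T\mathbf{a}$, and let $L$ be the period of $g$, i.e. the smallest $L>0$ with $g(x+L)=g(x)$ for all $x\in\mathbb{R}$. Then $$L=\frac{N}{\gcd\big[\operatorname{supp}\mathcal{F}(\mathbf{a})\setminus\{0\}\big]},$$ where $\mathcal{F}(\mathbf{a})$ is the discrete Fourier transform of $\mathbf{a}$, $\operatorname{supp}\mathcal{F}(\mathbf{a})\subseteq\{0,1,\dots,N-1\}$ is the set of frequency indices $k$ with $\mathcal{F}(\mathbf{a})_k\neq0$, and $\gcd$ denotes the greatest common divisor of that set of integers. *)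

(* Defs.v *)
From HB Require Import structures.
From mathcomp Require Import all_boot all_order all_algebra.
From mathcomp Require Import all_classical all_reals all_analysis.
Set Implicit Arguments. Unset Strict Implicit. Unset Printing Implicit Defensive.
Import Order.TTheory GRing.Theory Num.Theory.
Local Open Scope ring_scope.

(* cyclic shift matrix: (K x)_i = x_{i-1 mod N}, i.e. K i j = [j == i-1 mod N] *)
Definition shiftK (R : realType) (N : nat) : 'M[R]_N :=
  \matrix_(i, j) (((j : nat) == (i + N.-1) %% N)%N)%:R.

Definition Knu (R : realType) (N : nat) (nu : R) : 'M[R]_N :=
  (1 - nu) *: 1%:M + nu *: shiftK R N.

Definition Kpowz (R : realType) (N : nat) (m : int) : 'M[R]_N :=
  match m with
  | Posz n => shiftK R N ^+ n
  | Negz n => (shiftK R N)^T ^+ n.+1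
  end.

Definition calK (R : realType) (N : nat) (nt : R) : 'M[R]_N :=
  Kpowz R N (Num.floor nt) *m Knu N (nt - (Num.floor nt)%:~R).

Definition gfun (R : realType) (N : nat) (a b : 'cV[R]_N) (nt : R) : 'cV[R]_N :=
  b - (calK N nt)^T *m a.

(* DFT F(a)_k = sum_j a_j exp(-2 pi i j k / N), written via real and imaginary parts *)
Definition dft_re (R : realType) (N : nat) (a : 'cV[R]_N) (k : nat) : R :=
  \sum_(j < N) a j ord0 * cos (2 * pi * (j * k)%:R / N%:R).
Definition dft_im (R : realType) (N : nat) (a : 'cV[R]_N) (k : nat) : R :=
  - \sum_(j < N) a j ord0 * sin (2 * pi * (j * k)%:R / N%:R).

Definition in_supp_dft (R : realType) (N : nat) (a : 'cV[R]_N) (k : nat) : bool :=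
  (dft_re a k != 0) || (dft_im a k != 0).

Definition gcd_supp (R : realType) (N : nat) (a : 'cV[R]_N) : nat :=
  \big[gcdn/0%N]_(k < N | (0 < k)%N && in_supp_dft a k) (k : nat).

Definition is_period (R : realType) (N : nat) (g : R -> 'cV[R]_N) (L : R) : Prop :=
  forall x : R, g (x + L) = g x.

Definition parallel_to_one (R : realType) (N : nat) (v : 'cV[R]_N) : Prop :=
  exists c : R, v = c *: const_mx 1.

(* Main.v *)
Require Import Defs.
From HB Require Import structures.
From mathcomp Require Import all_boot all_order all_algebra.
From mathcomp Require Import all_classical all_reals all_analysis.
Import Order.TTheory GRing.Theory Num.Theory.
Local Open Scope ring_scope.
Set Implicit Arguments. Unset Strict Implicit. Unset Printing Implicit Defensive.
From mathcomp Require Import ring lra.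
Definition sh (R : realType) (n : nat) (p : int) (v : 'cV[R]_n.+1) : 'cV[R]_n.+1 :=
  \col_(i < n.+1) v (inord `|(((i : nat)%:Z + p) %% (n.+1)%:Z)%Z|) ord0.

Lemma modz_bound (n : nat) (x : int) : (`|(x %% (n.+1)%:Z)%Z| < n.+1)%N.
Proof.
rewrite -ltz_nat gez0_abs ?modz_ge0 //; exact: ltz_pmod.
Qed.

Lemma modz_absE (n : nat) (x : int) : (`|(x %% (n.+1)%:Z)%Z|%N)%:Z = (x %% (n.+1)%:Z)%Z.
Proof. by rewrite gez0_abs ?modz_ge0. Qed.

Lemma sh_sh (R : realType) (n : nat) (p q : int) (v : 'cV[R]_n.+1) :
  sh p (sh q v) = sh (p + q) v.
Proof.
apply/matrixP => i j; rewrite !mxE inordK ?modz_bound // modz_absE modzDml addrA.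
by [].
Qed.

Lemma sh0 (R : realType) (n : nat) (v : 'cV[R]_n.+1) : sh 0 v = v.
Proof.
apply/matrixP => i j; rewrite !mxE addr0 modz_nat absz_nat modn_small // (ord1 j).
by congr (v _ _); apply/val_inj; rewrite /= inordK.
Qed.

Lemma shN (R : realType) (n : nat) (p : int) (v : 'cV[R]_n.+1) :
  sh (p + (n.+1)%:Z) v = sh p v.
Proof.
by apply/matrixP => i j; rewrite !mxE addrA modzDr.
Qed.

Lemma shK1 (R : realType) (n : nat) (v : 'cV[R]_n.+1) :
  shiftK R n.+1 *m v = sh (-1) v.
Proof.
apply/matrixP => i j; rewrite !mxE (ord1 j).
rewrite (bigD1 (inord ((i + n) %% n.+1))) //= big1 ?addr0.
  rewrite !mxE inordK ?ltn_pmod // eqxx mul1r; congr (v _ _); apply/val_inj => /=.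
  have -> : ((i : nat)%:Z - 1 = (i + n)%:Z - (n.+1)%:Z)%R.
    by rewrite PoszD -addrA; congr (_ + _); rewrite -addn1 PoszD opprD addrA subrr add0r.
  by rewrite -(modzDr _ (n.+1)%:Z) subrK modz_nat absz_nat.
move=> k hk; rewrite !mxE /=.
case: eqP => [e|]; last by rewrite mul0r.
by case/eqP: hk; apply/val_inj; rewrite /= e inordK ?ltn_pmod.
Qed.

Lemma shKT1 (R : realType) (n : nat) (v : 'cV[R]_n.+1) :
  (shiftK R n.+1)^T *m v = sh 1 v.
Proof.
apply/matrixP => i j; rewrite !mxE (ord1 j).
rewrite (bigD1 (inord ((i + 1) %% n.+1)%N)) //= big1 ?addr0.
  rewrite !mxE inordK ?ltn_pmod // modz_nat absz_nat.
  have -> : i == (((i + 1) %% n.+1 + n) %% n.+1)%N :> nat.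
    by rewrite modnDml -addnA add1n modnDr modn_small.
  by rewrite mul1r.
move=> k hk; rewrite !mxE /=.
case: eqP => [e|]; last by rewrite mul0r.
case/eqP: hk; apply/val_inj; rewrite /= e inordK ?ltn_pmod //.
by rewrite modnDml -addnA addn1 modnDr modn_small.
Qed.

Lemma powT (R : realType) (n : nat) (M : 'M[R]_n.+1) (p : int) :
  (forall v, M^T *m v = sh p v) -> forall k v, (M ^+ k)^T *m v = sh (p * k%:Z) v.
Proof.
move=> hM; elim=> [|k IH] v.
  by rewrite expr0 trmx1 mul1mx mulr0 sh0.
rewrite exprSr -mulmxE trmx_mul -mulmxA IH hM sh_sh; congr (sh _ v).
by rewrite -addn1 PoszD mulrDr mulr1 addrC.
Qed.

Lemma KpowzT (R : realType) (n : nat) (k : int) (v : 'cV[R]_n.+1) :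
  (Kpowz R n.+1 k)^T *m v = sh k v.
Proof.
case: k => m /=.
  by rewrite (powT (@shKT1 R n)) mul1r.
have h1 : forall w : 'cV[R]_n.+1, ((shiftK R n.+1)^T)^T *m w = sh (-1) w.
  by move=> w; rewrite trmxK shK1.
by rewrite (powT h1) NegzE mulN1r.
Qed.

Lemma KnuT (R : realType) (n : nat) (f : R) (v : 'cV[R]_n.+1) :
  (Knu n.+1 f)^T *m v = (1 - f) *: v + f *: sh 1 v.
Proof.
by rewrite /Knu raddfD /= !linearZ /= trmx1 mulmxDl -!scalemxAl mul1mx shKT1.
Qed.

Lemma hform (R : realType) (n : nat) (a : 'cV[R]_n.+1) (k : int) (s : R) :
  0 <= s < 1 ->
  (calK n.+1 (k%:~R + s))^T *m a = (1 - s) *: sh k a + s *: sh (k + 1) a.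
Proof.
move=> /andP [s0 s1].
have fl : Num.floor (k%:~R + s) = k.
  apply: floor_def; rewrite lerDl s0 /= rmorphD /= ltrD2l; exact: s1.
rewrite /calK fl trmx_mul -mulmxA KpowzT KnuT sh_sh addrAC subrr add0r.
by rewrite [(1 + k)%R]addrC.
Qed.

Definition tw (R : realType) (N x : nat) : R := 2 * pi * x%:R / N%:R.

Lemma cosDk (R : realType) (y : R) (q : nat) : cos (y + (pi *+ 2) *+ q) = cos y.
Proof. elim: q => [|q IH]; first by rewrite mulr0n addr0.
by rewrite mulrSr addrA cosD2pi. Qed.

Lemma sinDk (R : realType) (y : R) (q : nat) : sin (y + (pi *+ 2) *+ q) = sin y.
Proof. elim: q => [|q IH]; first by rewrite mulr0n addr0.
by rewrite mulrSr addrA sinD2pi. Qed.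

Lemma twD (R : realType) (n x q : nat) :
  tw R n.+1 (x + n.+1 * q) = tw R n.+1 x + (pi *+ 2) *+ q.
Proof.
rewrite /tw natrD natrM -mulr_natr; field.
by rewrite addrC natr1 pnatr_eq0.
Qed.

Lemma cos_mod (R : realType) (n x : nat) : cos (tw R n.+1 (x %% n.+1)) = cos (tw R n.+1 x).
Proof. by rewrite {2}(divn_eq x n.+1) addnC mulnC twD cosDk. Qed.

Lemma sin_mod (R : realType) (n x : nat) : sin (tw R n.+1 (x %% n.+1)) = sin (tw R n.+1 x).
Proof. by rewrite {2}(divn_eq x n.+1) addnC mulnC twD sinDk. Qed.

Lemma cos_half (R : realType) (y : R) : cos y = 1 - (sin (y / 2)) ^+ 2 *+ 2.
Proof.
have e : y = y / 2 + y / 2 by field.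
by rewrite {1}e cosD -!expr2 cos2sin2 mulr2n opprD addrA.
Qed.

Lemma cos_eq1 (R : realType) (n x : nat) : cos (tw R n.+1 x) = 1 -> (n.+1 %| x)%N.
Proof.
rewrite -cos_mod /dvdn; set r := (x %% n.+1)%N.
have rlt : (r < n.+1)%N by rewrite ltn_pmod.
case: (posnP r) => [-> //| r0] hc; exfalso.
have hs : sin (tw R n.+1 r / 2) = 0.
  move: hc; rewrite cos_half => /eqP; rewrite subr_eq addrC -subr_eq subrr eq_sym.
  by rewrite mulrn_eq0 /= expf_eq0 /= => /eqP.
have e : tw R n.+1 r / 2 = pi * (r%:R / n.+1%:R) by rewrite /tw; field; rewrite addrC natr1 pnatr_eq0.
have q0 : 0 < r%:R / n.+1%:R :> R by rewrite divr_gt0 ?ltr0n.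
have q1 : r%:R / n.+1%:R < 1 :> R by rewrite ltr_pdivrMr ?ltr0n // mul1r ltr_nat.
have : 0 < sin (tw R n.+1 r / 2).
  apply: sin_gt0_pi; rewrite e mulr_gt0 ?pi_gt0 //= -[X in _ < X]mulr1 ltr_pM2l ?pi_gt0 //.
by rewrite hs ltxx.
Qed.

Lemma cos_sum0 (R : realType) (n m : nat) : ~~ (n.+1 %| m)%N ->
  \sum_(k < n.+1) cos (tw R n.+1 (m * k)) = 0.
Proof.
move=> ndvd.
set x := tw R n.+1 m.
have Nn0 : n.+1%:R != 0 :> R by rewrite pnatr_eq0.
have ek : forall k, tw R n.+1 (m * k) = k%:R * x.
  by move=> k; rewrite /x /tw natrM; field; rewrite addrC natr1.
have sx : sin (x / 2) != 0.
  apply/negP => /eqP hs; move: ndvd; rewrite (@cos_eq1 R n m) //.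
  by rewrite -/x cos_half hs expr0n /= mul0rn subr0.
pose F k := sin (k%:R * x - x / 2).
have tel : forall k, F k.+1 - F k = cos (k%:R * x) * (sin (x / 2) *+ 2).
  move=> k; rewrite /F -natr1 mulrDl mul1r.
  have -> : k%:R * x + x - x / 2 = k%:R * x + x / 2 by field.
  rewrite sinD sinB; ring.
have hsum : (\sum_(k < n.+1) cos (tw R n.+1 (m * k))) * (sin (x / 2) *+ 2) = 0.
  rewrite mulr_suml (eq_bigr (fun k : 'I_n.+1 => F k.+1 - F k)); last first.
    by move=> k _; rewrite ek tel.
  rewrite -(big_mkord xpredT (fun k => F k.+1 - F k)) telescope_sumr // /F.
  have -> : n.+1%:R * x = (pi *+ 2) *+ m by rewrite /x /tw -mulr_natr; field.
  by rewrite mul0r add0r [pi *+ 2 *+ m - _]addrC sinDk subrr.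
move/eqP: hsum; rewrite mulf_eq0 mulrn_eq0 /= (negbTE sx) orbF => /eqP //.
Qed.

Lemma twB (R : realType) (n l j k : nat) : (j <= n.+1 + l)%N ->
  tw R n.+1 ((l + n.+1 - j) * k) = tw R n.+1 (l * k) - tw R n.+1 (j * k) + (pi *+ 2) *+ k.
Proof.
move=> hj; rewrite /tw !natrM natrB ?natrD; last by rewrite addnC.
rewrite -mulr_natr; field; by rewrite addrC natr1 pnatr_eq0.
Qed.

Lemma mod_ne (n l j : nat) : (l < n.+1)%N -> (j < n.+1)%N -> l != j ->
  ~~ (n.+1 %| l + n.+1 - j)%N.
Proof.
move=> hl hj lj; apply/negP; rewrite /dvdn => /eqP h.
have : ((l + n.+1 - j + j) %% n.+1 = j %% n.+1)%N by rewrite -modnDml h.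
rewrite subnK; last by rewrite ltnW // ltn_addl.
by rewrite modnDr !modn_small // => /eqP; rewrite (negbTE lj).
Qed.

Lemma dft_inv (R : realType) (n : nat) (a : 'cV[R]_n.+1) (j : 'I_n.+1) :
  n.+1%:R * a j ord0 = \sum_(k < n.+1)
     (dft_re a k * cos (tw R n.+1 (j * k)) - dft_im a k * sin (tw R n.+1 (j * k))).
Proof.
transitivity (\sum_(k < n.+1) \sum_(l < n.+1) a l ord0 * cos (tw R n.+1 ((l + n.+1 - j) * k))); last first.
  apply: eq_bigr => k _; rewrite /dft_re /dft_im mulNr opprK !mulr_suml -big_split /=.
  apply: eq_bigr => l _; rewrite twB; last by rewrite ltnW // ltn_addr.
  rewrite cosDk cosB /tw; ring.
rewrite exchange_big /= (bigD1 j) //= [X in _ + X]big1 ?addr0.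
  rewrite -mulr_sumr mulrC; congr (_ * _).
  rewrite addKn (eq_bigr (fun _ => 1)) ?sumr_const ?card_ord //.
  move=> k _; rewrite /tw natrM.
  have -> : 2 * pi * (n.+1%:R * k%:R) / n.+1%:R = 0 + (pi *+ 2) *+ k :> R.
    by rewrite add0r -mulr_natr; field; rewrite addrC natr1 pnatr_eq0.
  by rewrite cosDk cos0.
move=> l hl; rewrite -mulr_sumr cos_sum0 ?mulr0 //.
exact: mod_ne.
Qed.

Lemma twNk (R : realType) (n j k : nat) : (k <= n.+1)%N ->
  tw R n.+1 (j * (n.+1 - k)) = - tw R n.+1 (j * k) + (pi *+ 2) *+ j.
Proof.
move=> hk; rewrite /tw !natrM natrB // -mulr_natr; field.
by rewrite addrC natr1 pnatr_eq0.
Qed.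

Lemma supp_sym (R : realType) (n : nat) (a : 'cV[R]_n.+1) (k : nat) : (k <= n.+1)%N ->
  in_supp_dft a k -> in_supp_dft a (n.+1 - k).
Proof.
move=> hk; rewrite /in_supp_dft.
have -> : dft_re a (n.+1 - k) = dft_re a k.
  by apply: eq_bigr => j _; rewrite -[X in cos X]/(tw R n.+1 (j * (n.+1 - k))) twNk // cosDk cosN.
have -> : dft_im a (n.+1 - k) = - dft_im a k.
  rewrite /dft_im opprK -sumrN; apply: eq_bigr => j _.
  by rewrite -[X in sin X]/(tw R n.+1 (j * (n.+1 - k))) twNk // sinDk sinN mulrN opprK.
by case/orP => h; apply/orP; [left|right]; rewrite // (oppr_eq0 (dft_im a k)).
Qed.

Lemma termwise (R : realType) (n : nat) (a : 'cV[R]_n.+1) (j1 j2 : 'I_n.+1) :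
  (forall k : 'I_n.+1, in_supp_dft a k ->
     cos (tw R n.+1 (j1 * k)) = cos (tw R n.+1 (j2 * k)) /\
     sin (tw R n.+1 (j1 * k)) = sin (tw R n.+1 (j2 * k))) ->
  a j1 ord0 = a j2 ord0.
Proof.
move=> h; apply: (@mulfI _ (n.+1%:R)); first by rewrite pnatr_eq0.
rewrite !dft_inv; apply: eq_bigr => k _.
case: (boolP (in_supp_dft a k)) => hk.
  by case: (h k hk) => -> ->.
move: hk; rewrite /in_supp_dft negb_or !negbK => /andP [/eqP -> /eqP ->].
by rewrite !mul0r subrr.
Qed.

Lemma rot_supp (R : realType) (n : nat) (a : 'cV[R]_n.+1) (m : nat) :
  (forall j : 'I_n.+1, a (inord ((j + m) %% n.+1)) ord0 = a j ord0) ->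
  forall k : nat, in_supp_dft a k -> (n.+1 %| m * k)%N.
Proof.
move=> hm k hk.
pose rot (j : 'I_n.+1) : 'I_n.+1 := inord ((j + m) %% n.+1).
have rotE : forall j : 'I_n.+1, (rot j : nat) = ((j + m) %% n.+1)%N.
  by move=> j; rewrite /rot inordK // ltn_pmod.
have rinj : injective rot.
  move=> j1 j2 /(congr1 val); rewrite /= !rotE => /eqP; rewrite eqn_modDr.
  by rewrite !modn_small // => /eqP /val_inj.
set C := cos (tw R n.+1 (m * k)); set S := sin (tw R n.+1 (m * k)).
have twj : forall j : 'I_n.+1, tw R n.+1 (rot j * k) = tw R n.+1 (j * k) + tw R n.+1 (m * k)
   \/ True.
  by move=> j; right.
have cr : forall j : 'I_n.+1, cos (tw R n.+1 (rot j * k)) = cos (tw R n.+1 (j * k)) * C - sin (tw R n.+1 (j * k)) * S.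
  move=> j; rewrite -cos_mod rotE modnMml cos_mod -cosD; congr cos.
  by rewrite /tw mulnDl natrD; ring.
have sr : forall j : 'I_n.+1, sin (tw R n.+1 (rot j * k)) = sin (tw R n.+1 (j * k)) * C + cos (tw R n.+1 (j * k)) * S.
  move=> j; rewrite -sin_mod rotE modnMml sin_mod -sinD; congr sin.
  by rewrite /tw mulnDl natrD; ring.
have e1 : dft_re a k = C * dft_re a k + S * dft_im a k.
  rewrite {1}/dft_re (reindex_inj rinj) /=.
  under eq_bigr => j _ do rewrite hm -[X in cos X]/(tw R n.+1 (rot j * k)) cr.
  rewrite /dft_re /dft_im mulrN !mulr_sumr -sumrN -big_split /=.
  by apply: eq_bigr => j _; rewrite /tw; ring.
have e2 : dft_im a k = C * dft_im a k - S * dft_re a k.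
  rewrite {1}/dft_im (reindex_inj rinj) /=.
  under eq_bigr => j _ do rewrite hm -[X in sin X]/(tw R n.+1 (rot j * k)) sr.
  rewrite /dft_re /dft_im !mulrN !mulr_sumr -!sumrN -big_split /=.
  by apply: eq_bigr => j _; rewrite /tw; ring.
have e3 : (1 - C) * (dft_re a k ^+ 2 + dft_im a k ^+ 2) = 0.
  have -> : (1 - C) * (dft_re a k ^+ 2 + dft_im a k ^+ 2) =
     dft_re a k * (dft_re a k - C * dft_re a k - S * dft_im a k) +
     dft_im a k * (dft_im a k - C * dft_im a k + S * dft_re a k) by ring.
  by rewrite {2}e1 {4}e2; ring.
have pos : dft_re a k ^+ 2 + dft_im a k ^+ 2 != 0.
  rewrite paddr_eq0 ?sqr_ge0 // !sqrf_eq0; move: hk; rewrite /in_supp_dft.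
  by case/orP => /negbTE ->; rewrite ?andbF.
move/eqP: e3; rewrite mulf_eq0 (negbTE pos) orbF subr_eq0 => /eqP C1.
exact: cos_eq1 (esym C1).
Qed.

Lemma sh_nat (R : realType) (n : nat) (a : 'cV[R]_n.+1) (m : nat) (j : 'I_n.+1) :
  sh (Posz m) a j ord0 = a (inord ((j + m) %% n.+1)) ord0.
Proof. by rewrite mxE -PoszD modz_nat absz_nat. Qed.

Lemma const_case (R : realType) (n : nat) (a : 'cV[R]_n.+1) :
  (forall k : 'I_n.+1, (0 < k)%N -> ~~ in_supp_dft a k) -> parallel_to_one a.
Proof.
move=> h; exists (a ord0 ord0); apply/matrixP => i j; rewrite (ord1 j) !mxE mulr1.
apply: termwise => k hk; case: (posnP k) => [-> | k0]; first by rewrite !muln0.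
by move: (h k k0); rewrite hk.
Qed.

Lemma seq_const (R : realType) (N : nat) (U : nat -> R) : (0 < N)%N ->
  (forall j, U j.+1 *+ 2 = U j + U j.+2) -> U N = U 0%N -> forall j, U j = U 0%N.
Proof.
move=> N0 hrec hN.
set c := U 1%N - U 0%N.
have lin : forall j, U j = U 0%N + j%:R * c /\ U j.+1 = U 0%N + j.+1%:R * c.
  elim=> [|j [IH1 IH2]]; first by split; rewrite ?mul0r ?addr0 // mul1r /c addrC subrK.
  split => //; have := hrec j; rewrite IH1 IH2 => e.
  have -> : U j.+2 = (U 0%N + j.+1%:R * c) *+ 2 - (U 0%N + j%:R * c) by rewrite e addrC addKr.
  rewrite -!natr1; ring.
have c0 : c = 0.
  move: hN; case: (lin N) => -> _ /eqP.
  by rewrite -subr_eq0 addrAC subrr add0r mulf_eq0 pnatr_eq0 eqn0Ngt N0 /= => /eqP.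
by move=> j; case: (lin j) => -> _; rewrite c0 mulr0 addr0.
Qed.

Lemma kink (R : realType) (n : nat) (a : 'cV[R]_n.+1) (L : R) :
  (forall x, (calK n.+1 (x + L))^T *m a = (calK n.+1 x)^T *m a) ->
  0 < L - (Num.floor L)%:~R ->
  forall (k : int) (i : 'I_n.+1),
    sh k a i ord0 *+ 2 = sh (k - 1) a i ord0 + sh (k + 1) a i ord0.
Proof.
move=> hL.
set m := Num.floor L; set f := L - m%:~R => f0 k i.
have f1 : f < 1.
  have := floorD1_gt L; rewrite -/m intrD /f => h; lra.
have Lm : L = m%:~R + f by rewrite /f addrC subrK.
have s0 : 0 <= (0 : R) < 1 by rewrite lexx ltr01.
have sf : 0 <= f < 1 by rewrite f1 ltW.
have sf' : 0 <= 1 - f < 1 by apply/andP; split; lra.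
have ent : forall (v w : 'cV[R]_n.+1), v = w -> v i ord0 = w i ord0 by move=> v w ->.
have E1 : sh k a i ord0 = (1 - f) * sh (k + m) a i ord0 + f * sh (k + m + 1) a i ord0.
  have := hL k%:~R.
  have -> : k%:~R + L = (k + m)%:~R + f by rewrite Lm intrD addrA.
  rewrite hform // -[X in calK _ X](addr0) hform // => /ent; rewrite !mxE.
  by rewrite subr0 mul1r mul0r addr0 => ->.
have E2 : sh (k + m) a i ord0 = f * sh (k - 1) a i ord0 + (1 - f) * sh k a i ord0.
  have := hL ((k - 1)%:~R + (1 - f)).
  have -> : (k - 1)%:~R + (1 - f) + L = (k + m)%:~R + 0 by rewrite Lm; ring.
  rewrite !hform // => /ent; rewrite !mxE subr0 mul1r mul0r addr0 => ->.
  by rewrite subKr subrK.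
have E3 : sh (k + m + 1) a i ord0 = f * sh k a i ord0 + (1 - f) * sh (k + 1) a i ord0.
  have := hL (k%:~R + (1 - f)).
  have -> : k%:~R + (1 - f) + L = (k + m + 1)%:~R + 0 by rewrite Lm !intrD; ring.
  rewrite !hform // => /ent; rewrite !mxE subr0 mul1r mul0r addr0 => ->.
  by rewrite subKr.
set u := sh k a i ord0 in E1 E2 E3 *.
set p := sh (k - 1) a i ord0 in E2 *.
set q := sh (k + 1) a i ord0 in E3 *.
have : f * (1 - f) * (u *+ 2 - p - q) = 0.
  have -> : f * (1 - f) * (u *+ 2 - p - q) =
    u - ((1 - f) * (f * p + (1 - f) * u) + f * (f * u + (1 - f) * q)) by ring.
  by rewrite -E2 -E3 -E1 subrr.
move/eqP; rewrite !mulf_eq0 => /orP [/orP [/eqP h|/eqP h]|/eqP h]; lra.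
Qed.

Theorem proposition4p1 (R : realType) (N : nat) (hN : (2 <= N)%N)
    (a b : 'cV[R]_N) (ha : ~ parallel_to_one a) (hb : ~ parallel_to_one b) :
  let L := (N%:R / (gcd_supp a)%:R : R) in
  0 < L /\ is_period (gfun a b) L /\
  (forall L' : R, 0 < L' -> is_period (gfun a b) L' -> L <= L').
Proof.
case: N hN a b ha hb => [//|n] hN a b ha hb L.
have [k0 [k0pos k0s]] : exists k0 : 'I_n.+1, (0 < k0)%N /\ in_supp_dft a k0.
  case: (boolP [exists k : 'I_n.+1, (0 < k)%N && in_supp_dft a k]).
    by case/existsP => k /andP [h1 h2]; exists k.
  move=> /existsPn h; exfalso; apply: ha; apply: const_case => k kp.
  by move: (h k); rewrite kp.
set G := gcd_supp a.
have Gdvd : forall k : 'I_n.+1, (0 < k)%N -> in_supp_dft a k -> (G %| k)%N.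
  by move=> k kp ks; apply: (biggcdn_inf k) => //; rewrite kp ks.
have G0 : (0 < G)%N.
  rewrite lt0n; apply/negP => /eqP G0; move: (Gdvd k0 k0pos k0s).
  by rewrite G0 dvd0n => /eqP k00; rewrite k00 in k0pos.
have GN : (G %| n.+1)%N.
  have k0lt := ltn_ord k0.
  have hk' : (n.+1 - k0 < n.+1)%N by rewrite ltn_subrL k0pos.
  have := Gdvd (Ordinal hk') _ (supp_sym (ltnW k0lt) k0s).
  rewrite /= subn_gt0 k0lt => /(_ isT) h1.
  by rewrite -(subnK (ltnW k0lt)) dvdn_add // Gdvd.
set d := (n.+1 %/ G)%N.
have Nd : n.+1 = (d * G)%N by rewrite divnK.
have Ld : L = d%:R.
  by rewrite /L -/G {1}Nd natrM mulfK // pnatr_eq0 -lt0n.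
have d0 : (0 < d)%N by rewrite lt0n; apply/negP => /eqP d0; move: Nd; rewrite d0.
have Hper : forall L', is_period (gfun a b) L' ->
    forall x, (calK n.+1 (x + L'))^T *m a = (calK n.+1 x)^T *m a.
  by move=> L' hp x; move: (hp x); rewrite /gfun => /addrI /oppr_inj.
have shd : sh (Posz d) a = a.
  apply/matrixP => j z; rewrite (ord1 z) sh_nat.
  apply: termwise => k hk; case: (posnP k) => [->|kp]; first by rewrite !muln0.
  have [q hq] := dvdnP (Gdvd k kp hk).
  suff e : ((inord ((j + d) %% n.+1) : 'I_n.+1) * k %% n.+1 = (j * k) %% n.+1)%N.
    by rewrite -cos_mod e cos_mod -sin_mod e sin_mod.
  rewrite inordK ?ltn_pmod // modnMml mulnDl hq.
  by rewrite [(d * _)%N]mulnCA -Nd addnC modnMDl.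
split; first by rewrite Ld ltr0n.
split.
  move=> x; rewrite /gfun; congr (_ - _).
  set k := Num.floor x; set f := x - k%:~R.
  have fs : 0 <= f < 1.
    have h1 := floor_le x; have h2 := floorD1_gt x; rewrite -/k intrD in h2.
    by apply/andP; split; rewrite /f; lra.
  have e1 : x + L = (k + Posz d)%:~R + f by rewrite Ld /f intrD; ring.
  have e2 : x = k%:~R + f by rewrite /f; ring.
  rewrite e1 {1}e2 !hform // [k + Posz d + 1]addrAC -!sh_sh shd.
  by [].
move=> L' L'0 hp; have hL := Hper L' hp.
set m := Num.floor L'.
have fge : 0 <= L' - m%:~R by rewrite subr_ge0 floor_le.
move: fge; rewrite le_eqVlt => /orP [/eqP f0 | fpos].
  have m0 : 0 <= m by rewrite floor_ge0 ltW.
  have Lm : L' = m%:~R by apply/eqP; rewrite -subr_eq0 -f0.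
  clear f0; clearbody m; case: m m0 Lm => [m' _ Lm|//].
  have m'0 : (0 < m')%N by rewrite -(ltr0n R) -[m'%:R]/((Posz m')%:~R) -Lm.
  have hm : sh (Posz m') a = a.
    have s0 : 0 <= (0 : R) < 1 by rewrite lexx ltr01.
    have h1 := hform a (Posz m') s0; rewrite addr0 in h1.
    have h2 := hform a 0 s0; rewrite addr0 (_ : (0 : int)%:~R = 0 :> R) // in h2.
    have := hL 0; rewrite add0r Lm h1 h2.
    by rewrite !subr0 !scale1r !scale0r !addr0 sh0.
  have hrot : forall j : 'I_n.+1, a (inord ((j + m') %% n.+1)) ord0 = a j ord0.
    by move=> j; rewrite -sh_nat hm.
  have : (n.+1 %| m' * G)%N.
    rewrite /G /gcd_supp.
    rewrite (big_morph (muln m') (muln_gcdr m') (muln0 m')).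
    apply/dvdn_biggcdP => k /andP [kp ks]; exact: rot_supp hrot k ks.
  rewrite Nd dvdn_pmul2r // => /(dvdn_leq m'0) dm.
  by rewrite Ld Lm ler_nat.
exfalso; apply: ha.
have K := kink hL fpos.
pose U j := a (inord (j %% n.+1)) ord0.
have hU : forall j, U j.+1 *+ 2 = U j + U j.+2.
  move=> j; have := K (Posz j.+1) ord0.
  rewrite (_ : Posz j.+1 - 1 = Posz j); last by rewrite -addn1 PoszD addrK.
  rewrite (_ : Posz j.+1 + 1 = Posz j.+2); last by rewrite -[j.+2]addn1 PoszD.
  by rewrite !sh_nat !add0n.
have := seq_const (ltn0Sn n) hU.
rewrite /U modnn mod0n => /(_ erefl) hc.
exists (a ord0 ord0); apply/matrixP => i z; rewrite (ord1 z) !mxE mulr1.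
have e := hc i; rewrite modn_small // inord_val in e; rewrite e.
by congr (a _ _); apply/val_inj; rewrite /= inordK.
Qed.
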